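(* Let $Q\in T_{d,n}\cap V_{d,n,\mathrm{gen}}$. Then the tangent space to $V_{d,n}$ at $Q$ is \[ \{Z\in M_n^d : [Q^r,Z^s]=[Q^s,Z^r]\ \ \forall\, 1\le r\ne s\le d\}, \] and the tangent space to $T_{d,n}$ at $Q$ is the set of $Z\in T_{d,n}$ satisfying the same equations. The real dimension of the first tangent space is $2n^2+2(d-1)n$ and of the second is $n^2+(2d-1)n$.
   Context: $M_n$ denotes the $n\times n$ complex matrices and $[A,B]=AB-BA$. $V_{d,n}$ is the set of $d$-tuples of pairwise commuting matrices in $M_n$; $V_{d,n,\mathrm{gen}}$ is the set of $X\in V_{d,n}$ each of whose components $X^r$ has $n$ distinct eigenvalues. $T_{d,n}$ is the set of commuting $d$-tuples of $n\times n$ matrices that are upper triangular with respect to a fixed basis. *)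

(* Defs.v *)
From HB Require Import structures.
From mathcomp Require Import all_boot all_order all_algebra.
From mathcomp Require Import reals.
From mathcomp Require Import complex.
Set Implicit Arguments. Unset Strict Implicit. Unset Printing Implicit Defensive.
Import Order.TTheory GRing.Theory Num.Theory.
Local Open Scope ring_scope.
Local Open Scope complex_scope.

(* A d-tuple of n x n complex matrices: X r = X^{r+1}. *)
Definition mxtuple (R : realType) (d n : nat) := 'I_d -> 'M[R[i]]_n.

Definition Vdn (R : realType) (d n : nat) (X : mxtuple R d n) : Prop :=
  forall r s : 'I_d, X r *m X s = X s *m X r.

Definition n_distinct_eigenvalues (R : realType) (n : nat) (A : 'M[R[i]]_n) : Prop :=
  exists s : seq R[i], [/\ uniq s, size s = n & forall a, a \in s -> eigenvalue A a].

Definition Vdn_gen (R : realType) (d n : nat) (X : mxtuple R d n) : Prop :=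
  Vdn X /\ forall r : 'I_d, n_distinct_eigenvalues (X r).

Definition upper_tuple (R : realType) (d n : nat) (X : mxtuple R d n) : Prop :=
  forall (r : 'I_d) (i j : 'I_n), (j < i)%N -> X r i j = 0.

Definition Tdn (R : realType) (d n : nat) (X : mxtuple R d n) : Prop :=
  Vdn X /\ upper_tuple X.

(* Tangent space of a set S of d-tuples at Q (S viewed as a subset of the real
   vector space M_n(C)^d): the set of velocities gamma'(0) of curves
   gamma : (-eps, eps) -> S with gamma(0) = Q, differentiable at 0. *)
Definition tangent_space (R : realType) (d n : nat)
  (S : mxtuple R d n -> Prop) (Q Z : mxtuple R d n) : Prop :=
  exists (gamma : R -> mxtuple R d n) (eps : R),
    [/\ 0 < eps,
        (forall t : R, `|t| < eps -> S (gamma t)),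
        gamma 0 = Q &
        forall e : R, 0 < e -> exists delta : R, 0 < delta /\
          forall t : R, 0 < `|t| < delta ->
            forall (r : 'I_d) (i j : 'I_n),
              `|(gamma t r i j - Q r i j) / t%:C - Z r i j| < e%:C].

Definition comm_bracket (R : realType) (n : nat) (A B : 'M[R[i]]_n) := A *m B - B *m A.

Definition tangent_eqs (R : realType) (d n : nat) (Q Z : mxtuple R d n) : Prop :=
  forall r s : 'I_d, r != s ->
    comm_bracket (Q r) (Z s) = comm_bracket (Q s) (Z r).

(* S (a set of d-tuples) is a real vector subspace of M_n(C)^d of real
   dimension k: it is the image of an injective R-linear map R^k -> M_n(C)^d. *)
Definition real_dim (R : realType) (d n : nat) (S : mxtuple R d n -> Prop) (k : nat) : Prop :=
  exists f : 'rV[R]_k -> mxtuple R d n,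
    [/\ (forall (a : R) (x y : 'rV[R]_k),
           f (a *: x + y) = (fun r => a%:C *: f x r + f y r)),
        injective f &
        forall Z, S Z <-> exists x, f x = Z].

(* Main.v *)
Require Import Defs.
From HB Require Import structures.
From mathcomp Require Import all_boot all_order all_algebra.
From mathcomp Require Import reals.
From mathcomp Require Import complex.
From mathcomp Require Import ring lra.
From Stdlib Require Import FunctionalExtensionality.
Set Implicit Arguments. Unset Strict Implicit. Unset Printing Implicit Defensive.
Import Order.TTheory GRing.Theory Num.Theory.
Local Open Scope ring_scope.
Local Open Scope complex_scope.
Section PolyCurve.
Variable R : realType.
Variable n' : nat.
Local Notation n := n'.+1.
Local Notation C := R[i].
Local Notation M := 'M[C]_n.

Definition PE (p : {poly C}) (X : {poly M}) : {poly M} :=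
  (map_poly (polyC \o (@scalar_mx C n)) p).[X].

Lemma PE0 X : PE 0 X = 0.
Proof. by rewrite /PE rmorph0 horner0. Qed.

Lemma PE_step p c X : PE (p * 'X + c%:P) X = PE p X * X + (c%:M)%:P.
Proof. by rewrite /PE rmorphD rmorphM /= map_polyX map_polyC /= hornerMXaddC. Qed.

Definition ev (t : R) (P : {poly M}) : M := P.[(t%:C)%:M].

Lemma comm_sc (P : {poly M}) (x : C) : comm_poly P x%:M.
Proof. by rewrite /comm_poly -!mulmxE scalar_mxC. Qed.

Lemma evD t P Q : ev t (P + Q) = ev t P + ev t Q.
Proof. by rewrite /ev hornerD. Qed.
Lemma evM t P Q : ev t (P * Q) = ev t P * ev t Q.
Proof. by rewrite /ev (hornerM_comm _ (comm_sc _ _)). Qed.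
Lemma evC t A : ev t A%:P = A.
Proof. by rewrite /ev hornerC. Qed.
Lemma evX t : ev t 'X = (t%:C)%:M.
Proof. by rewrite /ev hornerX. Qed.

Lemma ev_PE t p X : ev t (PE p X) = horner_mx (ev t X) p.
Proof.
elim/poly_ind: p => [|p c IH]; first by rewrite PE0 /ev horner0 rmorph0.
by rewrite PE_step evD evM IH evC rmorphD rmorphM /= horner_mx_X horner_mx_C.
Qed.

Lemma coef1M (P Q : {poly M}) : (P * Q)`_1 = P`_0 * Q`_1 + P`_1 * Q`_0.
Proof. by rewrite coefM !big_ord_recr big_ord0 /= add0r. Qed.

Definition Xof (Q Z : M) : {poly M} := Q%:P + 'X * Z%:P.

Lemma Xof0 Q Z : (Xof Q Z)`_0 = Q.
Proof. by rewrite /Xof coefD coefC coefXM /= addr0. Qed.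
Lemma Xof1 Q Z : (Xof Q Z)`_1 = Z.
Proof. by rewrite /Xof coefD coefC coefXM /= coefC /= add0r. Qed.

Lemma PE_coef0 p X : (PE p X)`_0 = horner_mx X`_0 p.
Proof.
elim/poly_ind: p => [|p c IH]; first by rewrite PE0 coef0 rmorph0.
by rewrite PE_step coefD coef0M IH coefC /= rmorphD rmorphM /= horner_mx_X horner_mx_C.
Qed.

Definition Dp (p : {poly C}) (Q Z : M) : M := (PE p (Xof Q Z))`_1.

Lemma Dp0 Q Z : Dp 0 Q Z = 0.
Proof. by rewrite /Dp PE0 coef0. Qed.

Lemma Dp_step p c Q Z : Dp (p * 'X + c%:P) Q Z = horner_mx Q p * Z + Dp p Q Z * Q.
Proof.
rewrite /Dp PE_step coefD coef1M PE_coef0 Xof0 Xof1 coefC /= addr0 //.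
Qed.

Lemma DpX Q Z : Dp 'X Q Z = Z.
Proof.
have -> : ('X : {poly C}) = 1 * 'X + 0%:P by rewrite mul1r addr0.
rewrite Dp_step rmorph1 mul1r.
have -> : (1 : {poly C}) = 0 * 'X + 1%:P by rewrite mul0r add0r.
rewrite Dp_step Dp0 rmorph0 !mul0r addr0.
by rewrite -mulmxE mul0mx addr0.
Qed.

Lemma Dp_lin p Q (a : C) Z W : Dp p Q (a *: Z + W) = a *: Dp p Q Z + Dp p Q W.
Proof.
elim/poly_ind: p => [|p c IH]; first by rewrite !Dp0 scaler0 addr0.
rewrite !Dp_step IH -!mulmxE mulmxDr mulmxDl -scalemxAr -scalemxAl scalerDr.
by rewrite addrACA.
Qed.

Lemma hm_commQ (Q : M) p : Q * horner_mx Q p = horner_mx Q p * Q.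
Proof.
have h := rmorphM (horner_mx Q) 'X p; have h2 := rmorphM (horner_mx Q) p 'X.
rewrite /= horner_mx_X in h h2; by rewrite -h -h2 mulrC.
Qed.

Lemma Dp_comm p Q Z :
  Q * Dp p Q Z - Dp p Q Z * Q = horner_mx Q p * Z - Z * horner_mx Q p.
Proof.
elim/poly_ind: p => [|p c IH]; first by rewrite Dp0 rmorph0 !(mulr0, mul0r) subrr.
rewrite Dp_step rmorphD rmorphM /= horner_mx_X horner_mx_C.
rewrite mulrDr mulrDl opprD addrACA.
have -> : Q * (Dp p Q Z * Q) - Dp p Q Z * Q * Q = (Q * Dp p Q Z - Dp p Q Z * Q) * Q.
  by rewrite mulrBl !mulrA.
rewrite IH mulrBl addrA subrK.
rewrite mulrDl mulrDr opprD addrACA.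
have -> : c%:M * Z - Z * c%:M = 0 :> M by rewrite -!mulmxE scalar_mxC subrr.
by rewrite addr0 mulrA hm_commQ !mulrA.
Qed.

End PolyCurve.
Section PolyCurve2.
Variable R : realType.
Variable n' : nat.
Local Notation n := n'.+1.
Local Notation C := R[i].
Local Notation M := 'M[C]_n.

Definition Gam (p q : {poly C}) (Q Z : M) : {poly M} :=
  PE p (Xof Q Z) + 'X * PE q (Xof Q Z).

Lemma Gam0 p q (Q Z : M) : (Gam p q Q Z)`_0 = horner_mx Q p.
Proof. by rewrite /Gam coefD coefXM /= addr0 PE_coef0 Xof0. Qed.

Lemma Gam1 p q (Q Z : M) : (Gam p q Q Z)`_1 = Dp p Q Z + horner_mx Q q.
Proof. by rewrite /Gam coefD coefXM /= PE_coef0 Xof0. Qed.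

Lemma ev_Xof t (Q Z : M) : ev t (Xof Q Z) = Q + t%:C *: Z.
Proof. by rewrite /Xof evD evM !evC evX -mulmxE mul_scalar_mx. Qed.

Lemma ev_Gam t p q (Q Z : M) :
  ev t (Gam p q Q Z) = horner_mx (Q + t%:C *: Z) (p + (t%:C)%:P * q).
Proof.
rewrite /Gam evD evM !ev_PE evX ev_Xof rmorphD rmorphM /= horner_mx_C.
by [].
Qed.

Lemma poly_expand (P : {poly M}) :
  exists Rp : {poly M}, P = (P`_0)%:P + 'X * ((P`_1)%:P + 'X * Rp).
Proof.
elim/poly_ind: P => [|P c _].
  by exists 0; rewrite !coef0 polyC0 !(mulr0, addr0).
elim/poly_ind: P => [|P c2 _].
  exists 0; rewrite mul0r add0r.
  by rewrite !coefC /= polyC0 !(mulr0, addr0).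
exists P; rewrite !coefD !coefMX !coefC /= !(addr0, add0r).
rewrite coefD coefMX coefC /= add0r.
rewrite [in RHS]addrC; congr (_ + _).
rewrite -(commr_polyX (c2%:P + 'X * P)); congr (_ * _).
by rewrite addrC commr_polyX.
Qed.

Lemma ev_entry (Rp : {poly M}) t a b :
  (ev t Rp) a b = \sum_(k < size Rp) Rp`_k a b * (t%:C) ^+ k.
Proof.
rewrite /ev horner_coef summxE; apply: eq_bigr => k _.
by rewrite -rmorphXn /= -mulmxE mul_mx_scalar mxE mulrC.
Qed.

Lemma normC_real (x : R) : `|x%:C| = `|x|%:C.
Proof.
by rewrite normc_def /= expr0n /= addr0 sqrtr_sqr.
Qed.

Lemma deriv_bound (P : {poly M}) : exists2 B : C, 0 <= B &
  forall t : R, t != 0 -> `|t| <= 1 -> forall a b : 'I_n,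
    `|((ev t P) a b - P`_0 a b) / t%:C - P`_1 a b| <= `|t%:C| * B.
Proof.
have [Rp eP] := poly_expand P.
exists (\sum_a \sum_b \sum_(k < size Rp) `|Rp`_k a b|).
  by apply: sumr_ge0 => a _; apply: sumr_ge0 => b _; apply: sumr_ge0.
move=> t t0 t1 a b.
have tC0 : t%:C != 0 by rewrite (inj_eq (@complexI _)).
have evP : ev t P = P`_0 + t%:C *: (P`_1 + t%:C *: ev t Rp).
  by rewrite {1}eP !evD !evM !evC evX evD evM evC evX -!mulmxE !mul_scalar_mx.
rewrite evP !mxE.
have -> : (P`_0 a b + t%:C * (P`_1 a b + t%:C * ev t Rp a b) - P`_0 a b) / t%:C - P`_1 a b
     = t%:C * ev t Rp a b.
  by field.
rewrite normrM ler_wpM2l //.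
have le1 : `|t%:C| <= 1 by rewrite normC_real -[1]/(1%:C) lecR.
rewrite ev_entry.
apply: (le_trans (ler_norm_sum _ _ _)).
apply: le_trans (_ : \sum_(k < size Rp) `|Rp`_k a b| <= _).
  apply: ler_sum => k _; rewrite normrM normrX.
  by rewrite ler_piMr ?exprn_ile1.
rewrite (bigD1 a) //= (bigD1 b) //= -addrA lerDl.
apply: addr_ge0; apply: sumr_ge0 => i _; apply: sumr_ge0 => // j _.
by apply: sumr_ge0.
Qed.

End PolyCurve2.
Section Curve.
Variable R : realType.
Variable d n' : nat.
Local Notation n := n'.+1.
Local Notation C := R[i].
Local Notation M := 'M[C]_n.

Definition upm (A : M) := forall i j : 'I_n, (j < i)%N -> A i j = 0.

Lemma upm_mul (A B : M) : upm A -> upm B -> upm (A *m B).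
Proof.
move=> hA hB i j ji; rewrite mxE; apply: big1 => k _.
case: (ltnP k i) => [ki|ik]; first by rewrite hA // mul0r.
by rewrite hB ?mulr0 //; apply: leq_trans ji ik.
Qed.

Lemma upm_add (A B : M) : upm A -> upm B -> upm (A + B).
Proof. by move=> hA hB i j ji; rewrite mxE hA ?hB ?addr0. Qed.

Lemma upm_scale (a : C) (A : M) : upm A -> upm (a *: A).
Proof. by move=> hA i j ji; rewrite mxE hA ?mulr0. Qed.

Lemma upm_scalar (a : C) : upm (a%:M).
Proof. by move=> i j ji; rewrite mxE; case: eqP => [e|]; [rewrite e ltnn in ji|]. Qed.

Lemma upm_hm (A : M) p : upm A -> upm (horner_mx A p).
Proof.
move=> hA; elim/poly_ind: p => [|p c IH].
  by rewrite rmorph0 => i j _; rewrite mxE.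
rewrite rmorphD rmorphM /= horner_mx_X horner_mx_C.
by apply: upm_add; [apply: upm_mul|apply: upm_scalar].
Qed.

Lemma curve (Q : mxtuple R d n) (r0 : 'I_d) (Z1 : M) (p q : 'I_d -> {poly C}) :
  (forall r, horner_mx (Q r0) (p r) = Q r) ->
  tangent_space (@Vdn R d n) Q (fun r => Dp (p r) (Q r0) Z1 + horner_mx (Q r0) (q r)) /\
  (upper_tuple Q -> upm Z1 ->
   tangent_space (@Tdn R d n) Q (fun r => Dp (p r) (Q r0) Z1 + horner_mx (Q r0) (q r))).
Proof.
move=> hp.
pose gamma (t : R) : mxtuple R d n := fun r => ev t (Gam (p r) (q r) (Q r0) Z1).
have gam_eq t r : gamma t r = horner_mx (Q r0 + t%:C *: Z1) (p r + (t%:C)%:P * q r).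
  by rewrite /gamma ev_Gam.
have memV t : Vdn (gamma t).
  by move=> r s; rewrite !gam_eq mulmxE -!rmorphM mulrC.
have gam0 : gamma 0 = Q.
  apply: functional_extensionality => r.
  by rewrite gam_eq rmorph0 scale0r addr0 polyC0 mul0r addr0 hp.
have der : forall e : R, 0 < e -> exists delta : R, 0 < delta /\
          forall t : R, 0 < `|t| < delta ->
            forall (r : 'I_d) (i j : 'I_n),
              `|(gamma t r i j - Q r i j) / t%:C - (Dp (p r) (Q r0) Z1 + horner_mx (Q r0) (q r)) i j| < e%:C.
  have [Bf Bf0 hB] := fin_all_exists2 (fun r => deriv_bound (Gam (p r) (q r) (Q r0) Z1)).
  set Bt := \sum_r Bf r.
  have Bt0 : 0 <= Bt by apply: sumr_ge0.
  have BfB r : Bf r <= Bt.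
    by rewrite /Bt (bigD1 r) //= lerDl; apply: sumr_ge0.
  set b := complex.Re Bt.
  have Btb : Bt = b%:C.
    by rewrite [LHS]complexE (ger0_Im Bt0) mulr0 addr0.
  have b0 : 0 <= b by rewrite -lecR -Btb.
  move=> e e0.
  exists (Num.min 1 (e / (b + 1))); split.
    by rewrite lt_min ltr01 /= divr_gt0 // ltr_wpDl.
  move=> t /andP [t0 ]; rewrite lt_min => /andP [t1 te] r i j.
  have tn0 : t != 0 by rewrite -normr_gt0.
  have := hB r t tn0 (ltW t1) i j.
  rewrite Gam0 Gam1 hp -/(gamma t r) => h.
  apply: (le_lt_trans h).
  apply: (le_lt_trans (y := `|t%:C| * Bt)).
    by rewrite ler_wpM2l.
  rewrite normC_real Btb -rmorphM ltcR.
  rewrite ltr_pdivlMr ?ltr_wpDl // in te.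
  apply: le_lt_trans te.
  by rewrite ler_wpM2l // lerDl.
split.
  by exists gamma, 1; split; [exact: ltr01| move=> t _; exact: memV | exact: gam0 | exact: der].
move=> hQ hZ; exists gamma, 1; split; [exact: ltr01| | exact: gam0 | exact: der].
move=> t _; split; first exact: memV.
move=> r i j ji; rewrite gam_eq; apply: upm_hm => //.
apply: upm_add; last exact: upm_scale.
by move=> a b ab; apply: hQ.
Qed.

End Curve.
Section Anal.
Variable R : realType.
Variable d n' : nat.
Local Notation n := n'.+1.
Local Notation C := R[i].
Local Notation M := 'M[C]_n.

Lemma realC (z : C) : 0 <= z -> z = (complex.Re z)%:C.
Proof. by move=> z0; rewrite [LHS]complexE (ger0_Im z0) mulr0 addr0. Qed.

Lemma minl (x y : R) : Num.min x y <= x. Proof. by rewrite ge_min lexx. Qed.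
Lemma minr (x y : R) : Num.min x y <= y. Proof. by rewrite ge_min lexx orbT. Qed.

Lemma small_zero (x K : C) : 0 <= K ->
  (forall e : R, 0 < e -> e <= 1 -> `|x| <= K * e%:C) -> x = 0.
Proof.
move=> K0 h; apply/eqP; rewrite -normr_eq0.
set m := complex.Re `|x|; set k := complex.Re K.
have xm : `|x| = m%:C by apply: realC.
have Kk : K = k%:C by apply: realC.
have k0 : 0 <= k by rewrite -lecR -Kk.
have m0 : 0 <= m by rewrite -lecR -xm; apply: normr_ge0.
rewrite xm -[0]/(0%:C) (inj_eq (@complexI _)) eq_le m0 andbT.
apply/ler_addgt0Pr => e e0; rewrite add0r.
have e1 : 0 < Num.min 1 (e / (k + 1)) by rewrite lt_min ltr01 divr_gt0 // ltr_wpDl.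
have := h _ e1 (minl _ _); rewrite xm Kk -rmorphM lecR => hm.
apply: (le_trans hm).
have : Num.min 1 (e / (k + 1)) <= e / (k + 1) by apply: minr.
move=> /(ler_wpM2l k0) hk; apply: (le_trans hk).
rewrite mulrA ler_pdivrMr ?ltr_wpDl // mulrC ler_wpM2l ?(ltW e0) //.
by rewrite lerDl.
Qed.

Definition N (A : M) : C := \sum_i \sum_j `|A i j|.

Lemma N_ge0 (A : M) : 0 <= N A.
Proof. by apply: sumr_ge0 => i _; apply: sumr_ge0. Qed.

Lemma N_row (A : M) i : \sum_j `|A i j| <= N A.
Proof.
rewrite /N [X in _ <= X](bigD1 i) //= lerDl; by apply: sumr_ge0 => k _; apply: sumr_ge0.
Qed.

Lemma N_entry (A : M) i j : `|A i j| <= N A.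
Proof.
apply: le_trans (N_row A i).
by rewrite [X in _ <= X](bigD1 j) //= lerDl; apply: sumr_ge0.
Qed.

Lemma N_add (A B : M) : N (A + B) <= N A + N B.
Proof.
rewrite /N -big_split; apply: ler_sum => i _; rewrite -big_split.
by apply: ler_sum => j _; rewrite mxE ler_normD.
Qed.

Lemma N_opp (A : M) : N (- A) = N A.
Proof. by apply: eq_bigr => i _; apply: eq_bigr => j _; rewrite mxE normrN. Qed.

Lemma N_sub (A B : M) : N (A - B) <= N A + N B.
Proof. by rewrite -(N_opp B); apply: N_add. Qed.

Lemma N_scale a (A : M) : N (a *: A) = `|a| * N A.
Proof.
rewrite /N mulr_sumr; apply: eq_bigr => i _; rewrite mulr_sumr.
by apply: eq_bigr => j _; rewrite mxE normrM.
Qed.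

Lemma N_mul (A B : M) : N (A *m B) <= N A * N B.
Proof.
apply: le_trans (_ : \sum_i \sum_j \sum_k `|A i k| * `|B k j| <= _).
  apply: ler_sum => i _; apply: ler_sum => j _; rewrite mxE.
  apply: le_trans (ler_norm_sum _ _ _) _.
  by apply: ler_sum => k _; rewrite normrM.
rewrite /N mulr_suml; apply: ler_sum => i _.
rewrite exchange_big /= mulr_suml; apply: ler_sum => k _.
rewrite -mulr_sumr; apply: ler_wpM2l => //.
exact: N_row.
Qed.

Lemma N_cb (A B : M) : N (comm_bracket A B) <= 2%:R * (N A * N B).
Proof.
rewrite /comm_bracket; apply: le_trans (N_sub _ _) _.
rewrite mulr2n mulrDl mul1r; apply: lerD; first exact: N_mul.
by rewrite mulrC; apply: N_mul.
Qed.

Lemma cb_addl (A B D : M) : comm_bracket (A + B) D = comm_bracket A D + comm_bracket B D :> M.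
Proof. by rewrite /comm_bracket mulmxDl mulmxDr opprD addrACA. Qed.
Lemma cb_addr (A B D : M) : comm_bracket A (B + D) = comm_bracket A B + comm_bracket A D :> M.
Proof. by rewrite /comm_bracket mulmxDl mulmxDr opprD addrACA. Qed.
Lemma cb_oppr (A B : M) : comm_bracket A (- B) = - comm_bracket A B :> M.
Proof. by rewrite /comm_bracket mulmxN mulNmx opprB opprK addrC. Qed.
Lemma cb_scalel a (A B : M) : comm_bracket (a *: A) B = a *: comm_bracket A B :> M.
Proof. by rewrite /comm_bracket -scalemxAl -scalemxAr scalerBr. Qed.
Lemma cb_scaler a (A B : M) : comm_bracket A (a *: B) = a *: comm_bracket A B :> M.
Proof. by rewrite /comm_bracket -scalemxAl -scalemxAr scalerBr. Qed.
Lemma cb_anti (A B : M) : comm_bracket A B = - comm_bracket B A :> M.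
Proof. by rewrite /comm_bracket opprB. Qed.

End Anal.
Section Tang.
Variable R : realType.
Variable d n' : nat.
Local Notation n := n'.+1.
Local Notation C := R[i].
Local Notation M := 'M[C]_n.

Lemma pick_t (a b e : R) : 0 < a -> 0 < b -> 0 < e ->
  exists t : R, [/\ 0 < t, t < a, t < b & t <= e].
Proof.
move=> a0 b0 e0; set m := Num.min (Num.min a b) e.
have m0 : 0 < m by rewrite !lt_min a0 b0 e0.
have ma : m <= a by rewrite /m (le_trans (minl _ _)) // minl.
have mb : m <= b by rewrite /m (le_trans (minl _ _)) // minr.
have me : m <= e by rewrite /m minr.
exists (m / 2); split; lra.
Qed.

Lemma tang_eqs (Q Z : mxtuple R d n) :
  tangent_space (@Vdn R d n) Q Z -> tangent_eqs Q Z.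
Proof.
case=> gamma [eps [eps0 hS g0 hd]] r s _.
have hQ : Vdn Q by rewrite -g0; apply: hS; rewrite normr0.
apply/eqP; rewrite -subr_eq0; apply/eqP.
set E := comm_bracket (Q r) (Z s) - comm_bracket (Q s) (Z r).
set n2 : C := (n * n)%:R.
have n20 : 0 <= n2 by apply: ler0n.
set K : C := 2%:R * (N (Q r) * n2) + 2%:R * (N (Q s) * n2)
           + 2%:R * ((N (Z r) + n2) * (N (Z s) + n2)).
have K0 : 0 <= K.
  by rewrite !addr_ge0 ?mulr_ge0 ?addr_ge0 ?N_ge0 ?ler0n.
apply/matrixP => i j; rewrite [RHS]mxE.
apply: (small_zero K0) => e e0 e1.
have [delta [d0 hdel]] := hd e e0.
have [t [t0 td teps te]] := pick_t d0 eps0 e0.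
have tn0 : t != 0 by rewrite gt_eqF.
have tC0 : t%:C != 0 by rewrite (inj_eq (@complexI _)).
have tat : `|t| = t by rewrite ger0_norm // ltW.
have tdel : 0 < `|t| < delta by rewrite tat t0 td.
pose Dl u := \matrix_(a, b) ((gamma t u a b - Q u a b) / t%:C).
have gD u : gamma t u = Q u + t%:C *: Dl u.
  by apply/matrixP => a b; rewrite !mxE; field.
have ND u : N (Z u - Dl u) <= n2 * e%:C.
  rewrite /N; apply: le_trans (_ : \sum_(a < n) \sum_(b < n) e%:C <= _).
    apply: ler_sum => a _; apply: ler_sum => b _; apply: ltW.
    by rewrite !mxE distrC; apply: hdel.
  by rewrite !sumr_const !card_ord -mulrnA /n2 mulr_natl.
have NDl u : N (Dl u) <= N (Z u) + n2.
  have -> : Dl u = Z u - (Z u - Dl u) by rewrite opprB addrC subrK.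
  apply: le_trans (N_sub _ _) _; rewrite lerD2l.
  apply: le_trans (ND u) _.
  by rewrite ler_piMr // -[1]/(1%:C) lecR.
have hc : comm_bracket (gamma t r) (gamma t s) = 0.
  by rewrite /comm_bracket (hS t _ r s) ?subrr // tat.
have hq : comm_bracket (Q r) (Q s) = 0 by rewrite /comm_bracket hQ subrr.
set F := comm_bracket (Q r) (Dl s) - comm_bracket (Q s) (Dl r).
set G := comm_bracket (Dl r) (Dl s).
have FG : F = - (t%:C *: G).
  move: hc; rewrite !gD cb_addl !cb_addr !cb_scalel !cb_scaler hq add0r.
  rewrite [comm_bracket (Dl r) (Q s)]cb_anti scalerN => h.
  have : t%:C *: (F + t%:C *: G) = 0 by rewrite /F scalerDr scalerBr -addrA.
  move/eqP; rewrite scaler_eq0 (negbTE tC0) /= addr_eq0 => /eqP //.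
have EF : E = F + (comm_bracket (Q r) (Z s - Dl s) - comm_bracket (Q s) (Z r - Dl r)).
  rewrite /E /F !cb_addr !cb_oppr.
  move: (comm_bracket (Q r) (Z s)) (comm_bracket (Q s) (Z r)) => a b.
  move: (comm_bracket (Q r) (Dl s)) (comm_bracket (Q s) (Dl r)) => c c'.
  by apply/matrixP => x y; rewrite !mxE; ring.
apply: le_trans (N_entry _ i j) _.
rewrite EF; apply: le_trans (N_add _ _) _.
rewrite /K mulrDl [X in _ <= X]addrC; apply: lerD.
  rewrite FG N_opp N_scale normC_real tat.
  rewrite mulrC; apply: ler_pM; [exact: N_ge0 | by rewrite ler0c ltW | | by rewrite lecR].
  apply: le_trans (N_cb _ _) _.
  apply: ler_wpM2l; first exact: ler0n.
  by apply: ler_pM; rewrite ?N_ge0.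
rewrite mulrDl; apply: le_trans (N_sub _ _) _; apply: lerD.
  apply: le_trans (N_cb _ _) _; rewrite -!mulrA; apply: ler_wpM2l; first exact: ler0n.
  by apply: ler_wpM2l; rewrite ?N_ge0.
apply: le_trans (N_cb _ _) _; rewrite -!mulrA; apply: ler_wpM2l; first exact: ler0n.
by apply: ler_wpM2l; rewrite ?N_ge0.
Qed.

Lemma tang_upper (Q Z : mxtuple R d n) :
  upper_tuple Q -> tangent_space (@Tdn R d n) Q Z -> upper_tuple Z.
Proof.
move=> hQ [gamma [eps [eps0 hS g0 hd]]] r i j ji.
apply: (small_zero (K := 1)) => // e e0 e1.
have [delta [d0 hdel]] := hd e e0.
have [t [t0 td teps te]] := pick_t d0 eps0 e0.
have tat : `|t| = t by rewrite ger0_norm // ltW.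
have := hdel t _ r i j; rewrite tat t0 td => /(_ isT).
rewrite (hS t _).2 ?tat // hQ // subrr mul0r add0r normrN mul1r => h.
exact: ltW.
Qed.

Lemma tangT_V (Q Z : mxtuple R d n) :
  tangent_space (@Tdn R d n) Q Z -> tangent_space (@Vdn R d n) Q Z.
Proof.
case=> g [e [e0 hS g0 hd]]; exists g, e; split => // t ht; exact: (hS t ht).1.
Qed.

End Tang.
Section LinAlg.
Variable R : realType.
Variable n' : nat.
Local Notation n := n'.+1.
Local Notation C := R[i].
Local Notation M := 'M[C]_n.

Variable A : M.
Hypothesis hA : upm A.

Lemma eig_support (u : 'rV[C]_n) a : u *m A = a *: u -> u != 0 ->
  exists j0, [/\ u 0 j0 != 0, A j0 j0 = a & forall j : 'I_n, (j < j0)%N -> u 0 j = 0].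
Proof.
move=> hu un0.
have [j1 hj1] : exists j1, u 0 j1 != 0.
  case: (pickP (fun j => u 0 j != 0)) => [j1 hj1 | h]; first by exists j1.
  exfalso; move/negP: un0; apply; apply/eqP/matrixP => x y.
  by rewrite ord1 mxE; move/negbFE: (h y) => /eqP.
case: (@arg_minnP _ j1 (fun j => u 0 j != 0) (fun j : 'I_n => nat_of_ord j) hj1) => j0 hj0 hmin.
have lt0 : forall j : 'I_n, (j < j0)%N -> u 0 j = 0.
  move=> j jj0; apply/eqP; apply/negP => /negP /hmin; by rewrite leqNgt jj0.
exists j0; split => //.
have e := congr1 (fun B : 'rV[C]_n => B 0 j0) hu; move: e => /=.
rewrite !mxE (bigD1 j0) //= big1 ?addr0 => [|k kj].
  by rewrite mulrC => /(mulIf hj0).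
case: (ltnP k j0) => [kj0 | j0k]; first by rewrite lt0 // mul0r.
rewrite hA ?mulr0 //; rewrite ltn_neqAle j0k andbT.
by rewrite eq_sym; apply: kj.
Qed.

Hypothesis hdiag : injective (fun i => A i i).

Lemma eig_exists k : exists v : 'rV[C]_n,
  [/\ v *m A = A k k *: v, v 0 k = 1 & forall j : 'I_n, (j < k)%N -> v 0 j = 0].
Proof.
set a := A k k.
have hdet : \det (A - a%:M) == 0.
  rewrite -det_tr det_trig; last first.
    apply/is_trig_mxP => i j ij; rewrite !mxE hA //.
    have -> : (j == i) = false by apply/eqP => e; move: ij; rewrite e ltnn.
    by rewrite mulr0n subrr.
  by rewrite (bigD1 k) //= !mxE eqxx mulr1n subrr mul0r.
have [v vn0 hv] := det0P hdet.
have hv' : v *m A = a *: v.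
  by apply/eqP; rewrite -subr_eq0 -mul_mx_scalar -mulmxBr hv.
have [j0 [vj0 aj0 lt0]] := eig_support hv' vn0.
have j0k : j0 = k by apply: hdiag.
subst j0.
exists ((v 0 k)^-1 *: v); split.
- rewrite -scalemxAl hv'; apply/matrixP => x y; rewrite !mxE; ring.
- by rewrite mxE mulVf.
- by move=> j jk; rewrite mxE (lt0 j jk) mulr0.
Qed.

Lemma eig_all : exists V : 'I_n -> 'rV[C]_n, forall k,
  [/\ V k *m A = A k k *: V k, V k 0 k = 1 & forall j : 'I_n, (j < k)%N -> V k 0 j = 0].
Proof. exact: (fin_all_exists eig_exists). Qed.

Variable V : 'I_n -> 'rV[C]_n.
Hypothesis hV : forall k,
  [/\ V k *m A = A k k *: V k, V k 0 k = 1 & forall j : 'I_n, (j < k)%N -> V k 0 j = 0].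

Definition Smx : M := \matrix_(k, j) V k 0 j.

Lemma Smx_unit : Smx \in unitmx.
Proof.
rewrite unitmxE -det_tr det_trig; last first.
  by apply/is_trig_mxP => i j ij; rewrite !mxE; have [_ _ ->] := hV j.
rewrite big1 ?unitr1 // => i _; rewrite !mxE; by have [_ -> _] := hV i.
Qed.

Lemma rows_eq (B1 B2 : M) : (forall k, V k *m B1 = V k *m B2) -> B1 = B2.
Proof.
move=> h.
have e : Smx *m B1 = Smx *m B2.
  apply/row_matrixP => k; rewrite !row_mul.
  have -> : row k Smx = V k by apply/rowP => j; rewrite !mxE.
  exact: h.
by rewrite -(mulKmx Smx_unit B1) e mulKmx // Smx_unit.
Qed.

Lemma eig_unique k (w : 'rV[C]_n) : w *m A = A k k *: w -> w = w 0 k *: V k.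
Proof.
move=> hw; set u := w - w 0 k *: V k.
have [hVk hVk1 _] := hV k.
have hu : u *m A = A k k *: u.
  by rewrite /u mulmxBl -scalemxAl hVk hw scalerBr !scalerA mulrC.
case: (eqVneq u 0) => [/eqP|un0]; first by rewrite subr_eq0 => /eqP.
have [j0 [uj0 aj0 _]] := eig_support hu un0.
have j0k : j0 = k by apply: hdiag.
by move: uj0; rewrite j0k /u !mxE hVk1 mulr1 subrr eqxx.
Qed.

Lemma eig_horner k p : V k *m horner_mx A p = p.[A k k] *: V k.
Proof.
have [hVk _ _] := hV k.
elim/poly_ind: p => [|p c IH]; first by rewrite rmorph0 mulmx0 horner0 scale0r.
rewrite rmorphD rmorphM /= horner_mx_X horner_mx_C -mulmxE mulmxDr mulmxA IH.
by rewrite -scalemxAl hVk scalerA mul_mx_scalar hornerMXaddC scalerDl.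
Qed.

Lemma interp (mu : 'I_n -> C) : exists c : nat -> C,
  forall k, (\poly_(i < n) c i).[A k k] = mu k.
Proof.
set a : 'rV[C]_n := \row_j A j j.
set Vd : 'M[C]_n := Vandermonde n a.
have Vu : Vd \in unitmx.
  rewrite unitmxE unitfE det_Vandermonde; apply/prodf_neq0 => i _.
  apply/prodf_neq0 => j ij; rewrite !mxE subr_eq0; apply/eqP => /hdiag e.
  by move: ij; rewrite e ltnn.
set c := (\row_k mu k) *m invmx Vd.
exists (fun i => c 0 (inord i)) => k.
have : (c *m Vd) 0 k = mu k by rewrite /c mulmxKV // mxE.
by rewrite mxE horner_poly => <-; apply: eq_bigr => i _; rewrite !mxE inord_val.
Qed.

Lemma commutant (B : M) : A *m B = B *m A ->
  exists c : nat -> C, B = horner_mx A (\poly_(i < n) c i).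
Proof.
move=> hAB.
have hk k : V k *m B = (V k *m B) 0 k *: V k.
  apply: eig_unique.
  have [hVk _ _] := hV k.
  by rewrite -mulmxA -hAB mulmxA hVk -scalemxAl.
have [c hc] := interp (fun k => (V k *m B) 0 k).
exists c; apply: rows_eq => k.
by rewrite eig_horner hc -hk.
Qed.

Lemma polyinj (c : nat -> C) : horner_mx A (\poly_(i < n) c i) = 0 ->
  forall i, (i < n)%N -> c i = 0.
Proof.
move=> h0.
set p := \poly_(i < n) c i.
have hr k : root p (A k k).
  have := eig_horner k p; rewrite h0 mulmx0 => /(congr1 (fun B : 'rV[C]_n => B 0 k)).
  have [_ hVk1 _] := hV k.
  by rewrite !mxE hVk1 mulr1 => /esym /eqP.
have p0 : p = 0.
  apply/eqP/negPn/negP => pn0.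
  have := max_poly_roots pn0 (rs := [seq A k k | k <- enum 'I_n]).
  rewrite size_map size_enum_ord map_inj_uniq ?enum_uniq //.
  have -> : all (root p) [seq A k k | k <- enum 'I_n].
    by apply/allP => x /mapP [k _ ->].
  move=> /(_ isT isT); rewrite ltnNge.
  by rewrite (size_poly n c).
move=> i lti; have := congr1 (fun q : {poly C} => q`_i) p0.
by rewrite coef_poly lti coef0.
Qed.

End LinAlg.

Lemma diag_inj (R : realType) n' (A : 'M[R[i]]_n'.+1) :
  upm A -> n_distinct_eigenvalues A -> injective (fun i => A i i).
Proof.
move=> hA [s [us ss hs]].
apply/injectiveP.
have sub : {subset s <= [seq A i i | i <- enum 'I_n'.+1]}.
  move=> a /hs /eigenvalueP [v hv vn0].
  have [j0 [_ aj0 _]] := eig_support hA hv vn0.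
  by apply/mapP; exists j0; rewrite ?mem_enum.
have := leq_size_uniq us sub.
rewrite size_map size_enum_ord ss leqnn => /(_ isT).
by [].
Qed.
Lemma real_dim_param (R : realType) (d n : nat) (I : finType) (k : nat)
  (S : mxtuple R d n -> Prop) (L : (I -> R) -> mxtuple R d n) :
  #|I| = k ->
  (forall (a : R) y1 y2, L (fun i => a * y1 i + y2 i) = (fun r => a%:C *: L y1 r + L y2 r)) ->
  injective L -> (forall Z, S Z <-> exists y, L y = Z) -> real_dim S k.
Proof.
move=> hk hlin hinj hS.
pose idx (i : I) : 'I_k := cast_ord hk (enum_rank i).
pose jdx (j : 'I_k) : I := enum_val (cast_ord (esym hk) j).
have ij i : jdx (idx i) = i by rewrite /jdx /idx cast_ordK enum_rankK.
have ji j : idx (jdx j) = j by rewrite /jdx /idx enum_valK cast_ordKV.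
exists (fun x : 'rV[R]_k => L (fun i => x 0 (idx i))); split.
- move=> a x y; rewrite -hlin; congr L; apply: functional_extensionality => i.
  by rewrite !mxE.
- move=> x y /hinj e; apply/rowP => j; rewrite -(ji j).
  exact: (congr1 (fun f => f (jdx j)) e).
- move=> Z; rewrite hS; split => [[y <-]|[x <-]]; last by exists (fun i => x 0 (idx i)).
  exists (\row_j y (jdx j)); congr L; apply: functional_extensionality => i.
  by rewrite mxE ij.
Qed.

Lemma ReIm_eq (R : realType) (x y x' y' : R) :
  x%:C + 'i * y%:C = x'%:C + 'i * y'%:C -> x = x' /\ y = y'.
Proof.
move=> e; have := congr1 (@complex.Re R) e; have := congr1 (@complex.Im R) e.
rewrite /= !mul0r !mul1r ?mulr0 ?add0r ?subr0 ?addr0 => h1 h2.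
by split.
Qed.
Section Main.
Variable R : realType.
Variables d' n' : nat.
Local Notation d := d'.+1.
Local Notation n := n'.+1.
Local Notation C := R[i].
Local Notation M := 'M[C]_n.
Variable Q : mxtuple R d n.
Hypothesis hT : Tdn Q.
Hypothesis hG : Vdn_gen Q.
Local Notation A := (Q ord0).

Lemma hA : upm A.
Proof. by move=> i j ji; apply: hT.2. Qed.

Lemma hdiagA : injective (fun i => A i i).
Proof. exact: (diag_inj hA (hG.2 ord0)). Qed.

Lemma exists_p : exists p : 'I_d -> {poly C},
  p ord0 = 'X /\ forall r, horner_mx A (p r) = Q r.
Proof.
have [V hV] := eig_all hA hdiagA.
have h r : exists c : nat -> C, Q r = horner_mx A (\poly_(i < n) c i).
  exact: (commutant hA hdiagA hV (hT.1 ord0 r)).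
have [cf hcf] := fin_all_exists h.
exists (fun r => if r == ord0 then 'X else \poly_(i < n) cf r i); split; first by rewrite eqxx.
by move=> r; case: eqP => [->|_]; [exact: horner_mx_X | exact: (esym (hcf r))].
Qed.

Section WithP.
Variable p : 'I_d -> {poly C}.
Hypothesis hp0 : p ord0 = 'X.
Hypothesis hp : forall r, horner_mx A (p r) = Q r.

Lemma decomp Z : tangent_eqs Q Z -> exists c : 'I_d -> nat -> C,
  Z = fun r => Dp (p r) A (Z ord0) + horner_mx A (\poly_(i < n) c r i).
Proof.
move=> heq.
have [V hV] := eig_all hA hdiagA.
have hc r : exists c : nat -> C,
    Z r - Dp (p r) A (Z ord0) = horner_mx A (\poly_(i < n) c i).
  apply: (commutant hA hdiagA hV).
  have e1 : A *m Dp (p r) A (Z ord0) - Dp (p r) A (Z ord0) *m A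
            = comm_bracket (Q r) (Z ord0).
    by rewrite !mulmxE Dp_comm hp.
  have e2 : comm_bracket A (Z r) = comm_bracket (Q r) (Z ord0).
    case: (eqVneq r ord0) => [->|rn0] //.
    by rewrite (heq r ord0 rn0).
  move: e1 e2; rewrite /comm_bracket.
  move: (Dp (p r) A (Z ord0)) => D e1 e2.
  apply/eqP; rewrite -subr_eq0; apply/eqP.
  rewrite mulmxBr mulmxBl.
  have -> : A *m Z r - A *m D - (Z r *m A - D *m A)
          = (A *m Z r - Z r *m A) - (A *m D - D *m A).
    move: (A *m Z r) (A *m D) (Z r *m A) (D *m A) => a b c e.
    by apply/matrixP => x y; rewrite !mxE; ring.
  by rewrite e1 e2 subrr.
have [c hc'] := fin_all_exists hc.
exists c; apply: functional_extensionality => r.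
by rewrite -hc' addrC subrK.
Qed.

Lemma charV Z : tangent_space (@Vdn R d n) Q Z <-> tangent_eqs Q Z.
Proof.
split; first exact: tang_eqs.
move=> /decomp [c ->].
exact: (curve (Z ord0) (fun r => \poly_(i < n) c r i) hp).1.
Qed.

Lemma charT Z : tangent_space (@Tdn R d n) Q Z <-> upper_tuple Z /\ tangent_eqs Q Z.
Proof.
split.
  move=> h; split; first exact: (tang_upper hT.2 h).
  by apply: tang_eqs; apply: tangT_V.
move=> [hu /decomp [c hc]].
rewrite hc; apply: (curve (Z ord0) (fun r => \poly_(i < n) c r i) hp).2.
  exact: hT.2.
by move=> i j ji; apply: hu.
Qed.

Lemma poly_lin (a : C) (E1 E2 : nat -> C) :
  \poly_(i < n) (a * E1 i + E2 i) = a *: \poly_(i < n) E1 i + \poly_(i < n) E2 i.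
Proof.
apply/polyP => i; rewrite coefD coefZ !coef_poly.
by case: (i < n)%N; rewrite ?mulr0 ?addr0.
Qed.

Lemma poly_zero : \poly_(i < n) (0 : C) = 0.
Proof. by apply/polyP => i; rewrite coef_poly coef0; case: (i < n)%N. Qed.

Lemma dim_gen (I1 : finType) (F1 : (I1 -> R) -> M) (U : M -> Prop)
  (St : mxtuple R d n -> Prop) :
  (forall a y1 y2, F1 (fun i => a * y1 i + y2 i) = a%:C *: F1 y1 + F1 y2) ->
  injective F1 -> (forall Z1, U Z1 <-> exists y, F1 y = Z1) ->
  (forall Z, St Z <-> U (Z ord0) /\ tangent_eqs Q Z) ->
  real_dim St (#|I1| + (d' * n + d' * n)).
Proof.
move=> F1lin F1inj hU hSt.
pose I := (I1 + (('I_d' * 'I_n) + ('I_d' * 'I_n)))%type.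
pose w (y : I -> R) (r' : 'I_d') (j : 'I_n) : C :=
  (y (inr (inl (r', j))))%:C + 'i * (y (inr (inr (r', j))))%:C.
pose cof (y : I -> R) (r : 'I_d) (i : nat) : C :=
  match unlift ord0 r with Some r' => w y r' (inord i) | None => 0 end.
pose L (y : I -> R) : mxtuple R d n := fun r =>
  Dp (p r) A (F1 (fun i => y (inl i))) + horner_mx A (\poly_(i < n) cof y r i).
have L0 y : L y ord0 = F1 (fun i => y (inl i)).
  by rewrite /L /cof unlift_none poly_zero rmorph0 addr0 hp0 DpX.
apply: (@real_dim_param R d n I _ St L).
- by rewrite !card_sum !card_prod !card_ord.
- move=> a y1 y2; apply: functional_extensionality => r.
  rewrite /L F1lin Dp_lin.
  have -> : \poly_(i < n) cof (fun i => a * y1 i + y2 i) r i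
          = a%:C *: \poly_(i < n) cof y1 r i + \poly_(i < n) cof y2 r i.
    rewrite -poly_lin; apply: eq_poly => i _; rewrite /cof.
    case: (unlift ord0 r) => [r'|]; last by rewrite mulr0 addr0.
    by rewrite /w !rmorphD !rmorphM /=; ring.
  rewrite linearD linearZ /=.
  by rewrite scalerDr addrACA.
- move=> y y' e.
  have [V hV] := eig_all hA hdiagA.
  have e1 : (fun i => y (inl i)) = (fun i => y' (inl i)).
    by apply: F1inj; rewrite -!L0 e.
  have e2 r' j : w y r' j = w y' r' j.
    have := congr1 (fun Z => Z (lift ord0 r')) e; rewrite /L e1 => /addrI.
    move=> /eqP; rewrite -subr_eq0 -linearB /= => /eqP.
    have -> : \poly_(i < n) cof y (lift ord0 r') i - \poly_(i < n) cof y' (lift ord0 r') i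
            = \poly_(i < n) (cof y (lift ord0 r') i - cof y' (lift ord0 r') i).
      by apply/polyP => i; rewrite coefB !coef_poly; case: (i < n)%N; rewrite ?subr0.
    move=> /(polyinj hdiagA hV) h.
    have := h j (ltn_ord j); rewrite /cof liftK inord_val => /eqP; rewrite subr_eq0 => /eqP //.
  apply: functional_extensionality => [[i|[[r' j]|[r' j]]]].
  + exact: (congr1 (fun f => f i) e1).
  + by have [] := ReIm_eq (e2 r' j).
  + by have [] := ReIm_eq (e2 r' j).
- move=> Z; rewrite hSt; split.
  + move=> [hU1 heq].
    have [y1 hy1] := (hU _).1 hU1.
    have [c hc] := decomp heq.
    pose y (x : I) : R := match x with
      | inl i => y1 i
      | inr (inl (r', j)) => complex.Re (c (lift ord0 r') j)
      | inr (inr (r', j)) => complex.Im (c (lift ord0 r') j) end.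
    exists y; apply: functional_extensionality => r.
    case: (unliftP ord0 r) => [r' ->|->]; last by rewrite L0.
    rewrite {1}hc /L /=.
    have -> : (fun i => y (inl i)) = y1 by [].
    rewrite hy1; congr (_ + horner_mx _ _).
    apply: eq_poly => i lti; rewrite /cof liftK /w /y inordK //.
    by rewrite -complexE.
  + move=> [y <-]; split.
      by rewrite L0; apply/(hU _).2; exists (fun i => y (inl i)).
    exact: tang_eqs (curve (F1 (fun i => y (inl i))) (fun r => \poly_(i < n) cof y r i) hp).1.
Qed.

Definition I1V := (('I_n * 'I_n) + ('I_n * 'I_n))%type.
Definition F1V (y : I1V -> R) : M :=
  \matrix_(i, j) ((y (inl (i, j)))%:C + 'i * (y (inr (i, j)))%:C).

Lemma dimV : real_dim (tangent_space (@Vdn R d n) Q) (#|{: I1V}| + (d' * n + d' * n)).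
Proof.
apply: (@dim_gen _ F1V (fun _ => True)).
- move=> a y1 y2; apply/matrixP => i j; rewrite !mxE.
  by rewrite !rmorphD !rmorphM /=; ring.
- move=> y y' e; apply: functional_extensionality => [[[i j]|[i j]]].
  + have := congr1 (fun B : M => B i j) e; rewrite /= !mxE => /ReIm_eq.
    by case.
  + have := congr1 (fun B : M => B i j) e; rewrite /= !mxE => /ReIm_eq.
    by case.
- move=> Z1; split => // _.
  exists (fun x => match x with
    | inl (i, j) => complex.Re (Z1 i j) | inr (i, j) => complex.Im (Z1 i j) end).
  by apply/matrixP => i j; rewrite mxE -complexE.
- by move=> Z; rewrite charV; tauto.
Qed.

Lemma upm_Dp (q : {poly C}) (Q1 Z1 : M) : upm Q1 -> upm Z1 -> upm (Dp q Q1 Z1).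
Proof.
move=> hQ hZ; elim/poly_ind: q => [|q c IH]; first by rewrite Dp0 => i j _; rewrite mxE.
rewrite Dp_step; apply: upm_add; apply: upm_mul => //.
exact: upm_hm.
Qed.

Definition I1T := (('I_n * 'I_n) + 'I_n)%type.
Definition F1T (y : I1T -> R) : M :=
  \matrix_(i, j) (if (i < j)%N then (y (inl (i, j)))%:C + 'i * (y (inl (j, i)))%:C
                 else if i == j then (y (inl (i, i)))%:C + 'i * (y (inr i))%:C else 0).

Lemma dimT : real_dim (tangent_space (@Tdn R d n) Q) (#|{: I1T}| + (d' * n + d' * n)).
Proof.
apply: (@dim_gen I1T F1T (@upm R n')).
- move=> a y1 y2; apply/matrixP => i j; rewrite !mxE.
  case: ifP => _; first by rewrite !rmorphD !rmorphM /=; ring.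
  case: ifP => _; first by rewrite !rmorphD !rmorphM /=; ring.
  by rewrite mulr0 addr0.
- move=> y y' e; apply: functional_extensionality => [[[i j]|i]].
  + case: (ltngtP i j) => [ij|ji|ij].
    * have := congr1 (fun B : M => B i j) e; rewrite /= !mxE ij => /ReIm_eq.
      by case.
    * have := congr1 (fun B : M => B j i) e; rewrite /= !mxE ji => /ReIm_eq.
      by case.
    * have eij : i = j by apply: val_inj.
      subst j.
      have := congr1 (fun B : M => B i i) e; rewrite /= !mxE ltnn eqxx => /ReIm_eq.
      by case.
  + have := congr1 (fun B : M => B i i) e; rewrite /= !mxE ltnn eqxx => /ReIm_eq.
    by case.
- move=> Z1; split => [hZ|[y <-]]; last first.
    move=> i j ji; rewrite mxE ltnNge (ltnW ji) /=.
    by rewrite (_ : (i == j) = false) //; apply/eqP => e; move: ji; rewrite e ltnn.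
  exists (fun x : I1T => match x with
    | inl (a, b) => if (a <= b)%N then complex.Re (Z1 a b) else complex.Im (Z1 b a)
    | inr i => complex.Im (Z1 i i) end).
  apply/matrixP => i j; rewrite mxE.
  case: (ltngtP i j) => [ij|ji|ij].
  + by rewrite /= -complexE.
  + rewrite (_ : (i == j) = false); last by apply/eqP => e; move: ji; rewrite e ltnn.
    by rewrite hZ.
  + have eij : i = j by apply: val_inj.
    by subst j; rewrite leqnn eqxx -complexE.
- move=> Z; rewrite charT; split => [[hu heq]|[hu heq]]; split => //.
    by move=> i j ji; apply: hu.
  have [c hc] := decomp heq.
  rewrite hc => r i j ji /=.
  apply: upm_add ji; first by apply: upm_Dp => //; exact: hA.
  by apply: upm_hm; exact: hA.
Qed.

End WithP.
End Main.
From mathcomp Require Import zify.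

Lemma mx00 (R : realType) (A B : 'M[R[i]]_0) : A = B.
Proof. by apply/matrixP => [[]]. Qed.

Lemma tup00 (R : realType) d (X Y : mxtuple R d 0) : X = Y.
Proof. by apply: functional_extensionality => r; apply: mx00. Qed.

Lemma tang0 (R : realType) d (S : mxtuple R d 0 -> Prop) (Q Z : mxtuple R d 0) :
  S Q -> tangent_space S Q Z.
Proof.
move=> hS; exists (fun _ => Q), 1; split; [exact: ltr01 | by move=> t _ | by [] | ].
by move=> e e0; exists 1; split; [exact: ltr01 | move=> t _ r []].
Qed.

Lemma rdim0 (R : realType) d (S : mxtuple R d 0 -> Prop) (Q : mxtuple R d 0) :
  (forall Z, S Z) -> real_dim S 0.
Proof.
move=> hS; exists (fun _ => Q); split.
- by move=> a x y; apply: tup00.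
- by move=> x y _; apply/rowP => [[]].
- by move=> Z; split => // _; exists 0; apply: tup00.
Qed.

Local Close Scope complex_scope.

Theorem lemma4p2 (R : realType) (d n : nat) (Q : mxtuple R d n) :
  (1 <= d)%N -> Tdn Q -> Vdn_gen Q ->
  [/\ (forall Z, tangent_space (@Vdn R d n) Q Z <-> tangent_eqs Q Z),
      (forall Z, tangent_space (@Tdn R d n) Q Z <-> upper_tuple Z /\ tangent_eqs Q Z),
      real_dim (tangent_space (@Vdn R d n) Q) (2 * n ^ 2 + 2 * (d - 1) * n)%N &
      real_dim (tangent_space (@Tdn R d n) Q) (n ^ 2 + (2 * d - 1) * n)%N].
Proof.
case: d Q => [|d'] Q hd hT hG //.
move: Q hT hG; case: n => [|n'] Q hT hG.
  have eq0 Z : tangent_eqs Q Z by move=> r s _; apply: mx00.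
  have up0 (Z : mxtuple R d'.+1 0) : upper_tuple Z by move=> r [].
  split.
  - by move=> Z; split => // _; apply: tang0; exact: hT.1.
  - by move=> Z; split => // _; apply: tang0; exact: hT.
  - rewrite !muln0 addn0; apply: (rdim0 Q) => Z; apply: tang0; exact: hT.1.
  - rewrite !muln0 addn0 exp0n //; apply: (rdim0 Q) => Z; apply: tang0; exact: hT.
have [p [hp0 hp]] := exists_p hT hG.
split.
- exact: (charV hT hG hp).
- exact: (charT hT hG hp).
- have -> : (2 * n'.+1 ^ 2 + 2 * (d'.+1 - 1) * n'.+1 = #|{: I1V n'}| + (d' * n'.+1 + d' * n'.+1))%N.
    rewrite /I1V card_sum !card_prod !card_ord; lia.
  exact: (dimV hT hG hp0 hp).
- have -> : (n'.+1 ^ 2 + (2 * d'.+1 - 1) * n'.+1 = #|{: I1T n'}| + (d' * n'.+1 + d' * n'.+1))%N.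
    rewrite /I1T card_sum !card_prod !card_ord; lia.
  exact: (dimT hT hG hp0 hp).
Qed.
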